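(* Let $S$ be a Stone relation algebra. Then: 1. For all ideal-points $p,q\in S$ with $p\neq q$: $p\sqcap q=\bot$ and $p^{\smile}q=\bot$. 2. If $S$ is simple, then every point of $S$ is an ideal-point. 3. An element $p\in S$ is an ideal-point if and only if $p$ is a point and for every point $q\in S$, $q\sqsubseteq p$ or $q\sqsubseteq\overline{p}$.
   Context: A Stone relation algebra is a structure $(S,\sqcup,\sqcap,\cdot,\overline{\,\cdot\,},{}^{\smile},\bot,\top,1)$ (write $xy$ for $x\cdot y$, $\overline{x}$ for the pseudocomplement, $x^{\smile}$ for the converse) such that: $(S,\sqcup,\sqcap,\bot,\top)$ is a bounded distributive lattice with order $x\sqsubseteq y\iff x\sqcup y=y$; $x\sqcap y=\bot\iff x\sqsubseteq\overline{y}$; $\overline{x}\sqcup\overline{\overline{x}}=\top$; $\cdot$ is associative with two-sided unit $1$, distributes over $\sqcup$ on both sides, and $\bot$ is a zero of $\cdot$; $x^{\smile\smile}=x$, $(xy)^{\smile}=y^{\smile}x^{\smile}$, $(x\sqcup y)^{\smile}=x^{\smile}\sqcup y^{\smile}$; $\overline{\overline{1}}=1$; $\overline{\overline{xy}}=\overline{\overline{x}}\,\overline{\overline{y}}$; $xy\sqcap z\sqsubseteq x(y\sqcap x^{\smile}z)$. $x$ is injective if $xx^{\smile}\sqsubseteq1$, surjective if $1\sqsubseteq x^{\smile}x$, a vector if $x\top=x$, a covector if $\top x=x$, an ideal if it is a vector and a covector, a point if it is an injective surjective vector, and simple if $\top x\top=\top$. $S$ is simple if every element other than $\bot$ is simple.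 An ideal-point is a point $p$ such that for all points $q$ and all ideals $x\neq\bot$, $qx\sqsubseteq p$ implies $q\sqsubseteq p$. *)

(* Defs.v *)
Record StoneRelAlg : Type := {
  car :> Type;
  sup : car -> car -> car;
  inf : car -> car -> car;
  comp : car -> car -> car;
  pc : car -> car;
  conv : car -> car;
  bot : car;
  top : car;
  one : car;
  sup_assoc : forall x y z, sup x (sup y z) = sup (sup x y) z;
  sup_comm : forall x y, sup x y = sup y x;
  inf_assoc : forall x y z, inf x (inf y z) = inf (inf x y) z;
  inf_comm : forall x y, inf x y = inf y x;
  sup_absorb : forall x y, sup x (inf x y) = x;
  inf_absorb : forall x y, inf x (sup x y) = x;
  inf_sup_distr : forall x y z, inf x (sup y z) = sup (inf x y) (inf x z);
  sup_bot : forall x, sup x bot = x;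
  inf_top : forall x, inf x top = x;
  pc_spec : forall x y, inf x y = bot <-> sup x (pc y) = pc y;
  stone : forall x, sup (pc x) (pc (pc x)) = top;
  comp_assoc : forall x y z, comp x (comp y z) = comp (comp x y) z;
  comp_one_l : forall x, comp one x = x;
  comp_one_r : forall x, comp x one = x;
  comp_sup_l : forall x y z, comp (sup x y) z = sup (comp x z) (comp y z);
  comp_sup_r : forall x y z, comp x (sup y z) = sup (comp x y) (comp x z);
  comp_bot_l : forall x, comp bot x = bot;
  comp_bot_r : forall x, comp x bot = bot;
  conv_invol : forall x, conv (conv x) = x;
  conv_comp : forall x y, conv (comp x y) = comp (conv y) (conv x);
  conv_sup : forall x y, conv (sup x y) = sup (conv x) (conv y);
  pp_one : pc (pc one) = one;
  pp_comp : forall x y, pc (pc (comp x y)) = comp (pc (pc x)) (pc (pc y));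
  dedekind : forall x y z,
    sup (inf (comp x y) z) (comp x (inf y (comp (conv x) z)))
    = comp x (inf y (comp (conv x) z))
}.

Section Defs.
Variable S : StoneRelAlg.

Definition le (x y : S) : Prop := sup S x y = y.

Definition injective (x : S) : Prop := le (comp S x (conv S x)) (one S).
Definition surjective (x : S) : Prop := le (one S) (comp S (conv S x) x).
Definition vector (x : S) : Prop := comp S x (top S) = x.
Definition covector (x : S) : Prop := comp S (top S) x = x.
Definition ideal (x : S) : Prop := vector x /\ covector x.
Definition point (x : S) : Prop := injective x /\ surjective x /\ vector x.
Definition simple_elt (x : S) : Prop := comp S (comp S (top S) x) (top S) = top S.
Definition ideal_point (p : S) : Prop :=
  point p /\
  forall q x : S, point q -> ideal x -> x <> bot S ->
    le (comp S q x) p -> le q p.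
End Defs.

Definition simple_alg (S : StoneRelAlg) : Prop :=
  forall x : S, x <> bot S -> simple_elt S x.

(* Main.v *)
Require Import Defs.
From Stdlib Require Import Classical.

Section L.
Variable S : StoneRelAlg.
Implicit Types x y z a b c p q r : S.

Lemma sup_idem x : sup S x x = x.
Proof. pose proof (sup_absorb S x (sup S x x)) as H. rewrite inf_absorb in H. exact H. Qed.
Lemma inf_idem x : inf S x x = x.
Proof. pose proof (inf_absorb S x (inf S x x)) as H. rewrite sup_absorb in H. exact H. Qed.
Lemma le_refl x : le S x x.
Proof. unfold le. apply sup_idem. Qed.
Lemma le_trans x y z : le S x y -> le S y z -> le S x z.
Proof. unfold le. intros H1 H2. rewrite <- H2, sup_assoc, H1. reflexivity. Qed.
Lemma le_antisym x y : le S x y -> le S y x -> x = y.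
Proof. unfold le. intros H1 H2. rewrite <- H1. rewrite sup_comm. symmetry. exact H2. Qed.
Lemma le_inf x y : le S x y <-> inf S x y = x.
Proof. split; intro H.
- rewrite <- H. apply inf_absorb.
- unfold le. rewrite <- H. rewrite sup_comm, inf_comm. apply sup_absorb. Qed.
Lemma inf_lb_l x y : le S (inf S x y) x.
Proof. apply le_inf. rewrite inf_comm, inf_assoc, inf_idem. reflexivity. Qed.
Lemma inf_lb_r x y : le S (inf S x y) y.
Proof. apply le_inf. rewrite <- inf_assoc, inf_idem. reflexivity. Qed.
Lemma inf_glb a b c : le S a b -> le S a c -> le S a (inf S b c).
Proof. rewrite !le_inf. intros H1 H2. rewrite inf_assoc, H1, H2. reflexivity. Qed.
Lemma le_top x : le S x (top S).
Proof. apply le_inf. apply inf_top. Qed.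
Lemma le_bot_eq x : le S x (bot S) -> x = bot S.
Proof. unfold le. rewrite sup_bot. auto. Qed.
Lemma comp_mono_r z x y : le S x y -> le S (comp S z x) (comp S z y).
Proof. unfold le. intro H. rewrite <- comp_sup_r, H. reflexivity. Qed.
Lemma comp_mono_l z x y : le S x y -> le S (comp S x z) (comp S y z).
Proof. unfold le. intro H. rewrite <- comp_sup_l, H. reflexivity. Qed.
Lemma comp_mono x y x' y' : le S x x' -> le S y y' -> le S (comp S x y) (comp S x' y').
Proof. intros. eapply le_trans. apply comp_mono_l; eauto. apply comp_mono_r; auto. Qed.
Lemma conv_mono x y : le S x y -> le S (conv S x) (conv S y).
Proof. unfold le. intro H. rewrite <- conv_sup, H. reflexivity. Qed.
Lemma conv_inf_le x y : le S (conv S (inf S x y)) (inf S (conv S x) (conv S y)).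
Proof. apply inf_glb; apply conv_mono; [apply inf_lb_l | apply inf_lb_r]. Qed.
Lemma conv_le x y : le S (conv S x) y -> le S x (conv S y).
Proof. intro H. apply conv_mono in H. rewrite conv_invol in H. exact H. Qed.
Lemma one_le_top : le S (one S) (top S).
Proof. apply le_top. Qed.
Lemma top_top : comp S (top S) (top S) = top S.
Proof. apply le_antisym. apply le_top.
  rewrite <- (comp_one_r S (top S)) at 1. apply comp_mono_r, le_top. Qed.
Lemma pc_disj x : inf S x (pc S x) = bot S.
Proof. rewrite inf_comm. apply (pc_spec S (pc S x) x). apply le_refl. Qed.

Lemma dedekind2 x y z :
  le S (inf S (comp S x y) z) (comp S (inf S x (comp S z (conv S y))) y).
Proof.
  pose proof (dedekind S (conv S y) (conv S x) (conv S z)) as H.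
  change (le S (inf S (comp S (conv S y) (conv S x)) (conv S z))
     (comp S (conv S y) (inf S (conv S x) (comp S (conv S (conv S y)) (conv S z))))) in H.
  rewrite conv_invol in H.
  match goal with |- le S ?A ?B => cut (le S (conv S A) (conv S B)) end.
  { intro K. apply conv_mono in K. rewrite !conv_invol in K. exact K. }
  eapply le_trans. apply conv_inf_le.
  rewrite conv_comp. eapply le_trans. apply H.
  rewrite conv_comp. apply comp_mono_r. apply conv_le. eapply le_trans. apply conv_inf_le.
  rewrite conv_invol, conv_comp, conv_invol. apply le_refl.
Qed.

Lemma vector_inf q p : vector S q -> vector S p -> vector S (inf S q p).
Proof. unfold vector. intros Hq Hp. apply le_antisym.
- apply inf_glb.
  + rewrite <- Hq at 2. apply comp_mono_l, inf_lb_l.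
  + rewrite <- Hp at 2. apply comp_mono_l, inf_lb_r.
- rewrite <- (comp_one_r S (inf S q p)) at 1. apply comp_mono_r, le_top.
Qed.

Lemma key q p : point S q ->
  le S (inf S q (comp S (top S) (inf S q p))) p.
Proof.
  intros [Hi [Hs Hv]].
  rewrite inf_comm. eapply le_trans. apply dedekind2.
  eapply le_trans. apply comp_mono_l. apply inf_lb_r.
  rewrite <- comp_assoc.
  eapply le_trans. apply comp_mono_r. apply comp_mono.
  apply conv_mono, inf_lb_l. apply inf_lb_r.
  rewrite comp_assoc. eapply le_trans. apply comp_mono_l. exact Hi.
  rewrite comp_one_l. apply le_refl.
Qed.

Lemma vec_le q x : vector S q -> le S (comp S q x) q.
Proof. intro H. unfold vector in H. rewrite <- H at 2. apply comp_mono_r, le_top. Qed.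

Lemma part3a p : ideal_point S p ->
  forall q, point S q -> le S q p \/ le S q (pc S p).
Proof.
  intros [Pp Hp] q Pq.
  set (r := inf S q p).
  destruct (classic (comp S (top S) r = bot S)) as [E|E].
  - right. apply (pc_spec S q p). apply le_bot_eq. rewrite <- E.
    rewrite <- (comp_one_l S (inf S q p)) at 1. apply comp_mono_l, le_top.
  - left. assert (Vr : vector S r).
    { apply vector_inf. apply Pq. apply Pp. }
    apply (Hp q (comp S (top S) r) Pq).
    + split; unfold vector, covector.
      * rewrite <- comp_assoc, Vr. reflexivity.
      * rewrite comp_assoc, top_top. reflexivity.
    + exact E.
    + eapply le_trans. 2: apply (key q p Pq). apply inf_glb.
      * apply vec_le. apply Pq.
      * rewrite comp_assoc. apply comp_mono_l. apply le_top.
Qed.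

Lemma part3b p : point S p -> (forall q, point S q -> le S q p \/ le S q (pc S p)) ->
  ideal_point S p.
Proof.
  intros Pp H. split; [exact Pp|].
  intros q x Pq Ix Nx Hle. destruct (H q Pq) as [H1|H1]; [exact H1|].
  exfalso. apply Nx.
  assert (Y : comp S q x = bot S).
  { apply le_bot_eq. rewrite <- (pc_disj p). apply inf_glb. exact Hle.
    eapply le_trans. apply vec_le. apply Pq. exact H1. }
  apply le_bot_eq. rewrite <- (comp_one_l S x).
  eapply le_trans. apply comp_mono_l. apply Pq.
  rewrite <- comp_assoc, Y, comp_bot_r. apply le_refl.
Qed.

Lemma point_le_eq p q : point S p -> point S q -> le S q p -> p = q.
Proof.
  intros Pp Pq H. apply le_antisym; [|exact H].
  rewrite <- (comp_one_r S p).
  eapply le_trans. apply comp_mono_r. apply Pq.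
  eapply le_trans. apply comp_mono_r. apply comp_mono_l. apply conv_mono. exact H.
  rewrite comp_assoc. eapply le_trans. apply comp_mono_l. apply Pp.
  rewrite comp_one_l. apply le_refl.
Qed.

End L.

Theorem mainTheorem11 (S : StoneRelAlg) :
  (forall p q : S, ideal_point S p -> ideal_point S q -> p <> q ->
     inf S p q = bot S /\ comp S (conv S p) q = bot S)
  /\ (simple_alg S -> forall p : S, point S p -> ideal_point S p)
  /\ (forall p : S, ideal_point S p <->
        (point S p /\ forall q : S, point S q -> le S q p \/ le S q (pc S p))).
Proof.
  split; [|split].
  - intros p q Ip Iq Ne.
    destruct (part3a S p Ip q (proj1 Iq)) as [H|H].
    + exfalso. apply Ne. apply point_le_eq; auto. apply Ip. apply Iq.
    + assert (E : inf S p q = bot S).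
      { rewrite inf_comm. apply (pc_spec S q p). exact H. }
      split; [exact E|].
      apply le_bot_eq. rewrite <- (inf_top S (comp S (conv S p) q)).
      eapply le_trans. apply (dedekind S (conv S p) q (top S)).
      rewrite conv_invol. destruct Ip as [[_ [_ Vp]] _]. unfold vector in Vp.
      rewrite Vp, inf_comm, E, comp_bot_r. apply le_refl.
  - intros Hs p Pp. split; [exact Pp|].
    intros q x Pq [Vx Cx] Nx Hle.
    pose proof (Hs x Nx) as T. unfold simple_elt in T.
    unfold covector in Cx. unfold vector in Vx. rewrite Cx, Vx in T.
    rewrite T in Hle. destruct Pq as [_ [_ Vq]]. unfold vector in Vq.
    rewrite Vq in Hle. exact Hle.
  - intro p. split.
    + intro Ip. split. apply Ip. apply part3a; auto.
    + intros [Pp H]. apply part3b; auto.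
Qed.
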